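(* Let $T$ be a tournament, let $P=x_0x_1\ldots x_r$ be a path of length $r$ in $T$, and let $z\in V(T)\setminus V(P)$ be a vertex such that every vertex of $\{x_{\alpha+1},x_{\alpha+2},\ldots,x_r\}$ dominates $z$ and $z$ dominates every vertex of $\{x_0,x_1,\ldots,x_\alpha\}$, where $\alpha\in[2,r-3]$. Assume that $T$ contains no $(x_0,x_r)$-path of length $r+1$ whose vertex set is $\{z\}\cup V(P)$. Suppose that $x_sx_t$ is an arc of $T$ with $s\in[1,\alpha-1]$ and $t\in[\alpha+3,r]$. Then: if $s\geq 3$, no vertex of $\{x_0,x_1,\ldots,x_{s-2}\}$ dominates a vertex of $\{x_{\alpha+2},x_{\alpha+3},\ldots,x_{t-1}\}$; and if $t-s\neq 5$, then $x_{s-1}$ dominates no vertex of $\{x_{\alpha+2},x_{\alpha+3},\ldots,x_{t-1}\}$.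
   Context: Paths are directed and simple; the length of a path is its number of arcs. A vertex $u$ dominates $v$ if $uv$ is an arc. $[a,b]$ denotes the integers from $a$ to $b$. *)

(* Defs.v *)
From mathcomp Require Import all_boot.
Set Implicit Arguments. Unset Strict Implicit. Unset Printing Implicit Defensive.

(* A tournament on a finite vertex type V: adj u v means "u dominates v" (arc uv).
   No loops, and for distinct u, v exactly one of uv, vu is an arc. *)
Definition tournament (V : finType) (adj : rel V) : Prop :=
  irreflexive adj /\ forall u v : V, u != v -> adj u v = ~~ adj v u.

(* A directed simple path, given as its (nonempty) sequence of vertices;
   its length is size s - 1 (number of arcs). *)
Definition dpath (V : finType) (adj : rel V) (s : seq V) : Prop :=
  s <> [::] /\ uniq s /\ sorted adj s.

(* Main.v *)
Require Import Defs.
From mathcomp Require Import all_boot.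
From mathcomp Require Import zify.

Section Setting.
Variables (V : finType) (adj : rel V) (r : nat) (P : seq V) (z : V) (alpha : nat).
Hypothesis Htour : tournament adj.
Hypothesis HP : dpath adj P.
Hypothesis HsP : size P = r.+1.
Hypothesis HzP : z \notin P.
Hypothesis Hzin : forall i, alpha < i <= r -> adj (nth z P i) z.
Hypothesis Hzout : forall i, i <= alpha -> adj z (nth z P i).
Hypothesis HnoQ : ~ (exists Q : seq V, [/\ dpath adj Q, size Q = r.+2,
        head z Q = nth z P 0, last z Q = nth z P r & Q =i z :: P]).

Definition R a b := adj (nth z P a) (nth z P b).
Definition flat (T : seq (nat * nat)) := flatten [seq iota p.1 (p.2.+1 - p.1) | p <- T].

Fixpoint chainok (a : nat) (T : seq (nat * nat)) : Prop :=
  match T with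
  | [::] => a = r
  | p :: T' => R a p.1 /\ p.1 <= p.2 /\ (p.2 <= r \/ p.1 = p.2) /\ chainok p.2 T'
  end.

Lemma nthz : nth z P r.+1 = z.
Proof. by rewrite nth_default // HsP. Qed.

Lemma Rz a : alpha < a <= r -> R a r.+1.
Proof. by move=> h; rewrite /R nthz; apply: Hzin. Qed.

Lemma zR a : a <= alpha -> R r.+1 a.
Proof. by move=> h; rewrite /R nthz; apply: Hzout. Qed.

Lemma Rcons a : a < r -> R a a.+1.
Proof.
move=> h; case: HP => _ [_ Hs].
rewrite /R; case: P Hs HsP => [//|p0 P'] /= Hs HsP'.
have := (pathP z Hs) a; rewrite -/(nth z (p0 :: P') a) => ->; first by [].
lia.
Qed.

Lemma P_uniq : uniq P. Proof. by case: HP => _ []. Qed.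

Lemma nth_inj a b : a <= r -> b <= r -> (nth z P a == nth z P b) = (a == b).
Proof. move=> ha hb; apply: nth_uniq; rewrite ?HsP //; exact: P_uniq. Qed.

Lemma flip a b : a <= r -> b <= r -> a != b -> ~~ R a b -> R b a.
Proof.
move=> ha hb hab h; case: Htour => _ Ht.
rewrite /R Ht; first exact: h.
by rewrite nth_inj // eq_sym.
Qed.

Lemma asym a b : R a b -> R b a -> False.
Proof.
case: Htour => Hirr Ht; rewrite /R => h1 h2.
case: (eqVneq (nth z P a) (nth z P b)) => e.
  by move: h1; rewrite e Hirr.
by move: h1; rewrite (Ht _ _ e) h2.
Qed.

Lemma path_iota a n : a + n <= r -> path R a (iota a.+1 n).
Proof.
elim: n a => [|n IH] a h //=.
rewrite Rcons; last lia.
apply: IH; lia.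
Qed.

Lemma last_iota a n : last a (iota a.+1 n) = a + n.
Proof. elim: n a => [|n IH] a /=; first by rewrite addn0. by rewrite IH; lia. Qed.

Lemma chainok_path a T : chainok a T -> path R a (flat T) /\ last a (flat T) = r.
Proof.
elim: T a => [|[lo hi] T IH] a /=; first by move=> ->.
move=> [ha [hlh [hr hT]]].
have E : hi.+1 - lo = (hi - lo).+1 by lia.
rewrite /flat /= -/(flat T) E /= cat_path last_cat /=.
have -> : last lo (iota lo.+1 (hi - lo)) = hi by rewrite last_iota; lia.
have [-> ->] := IH _ hT; rewrite ha /= andbT.
split=> //; case: hr => hr; first by apply: path_iota; lia.
by have -> : hi - lo = 0 by lia.
Qed.

Lemma good h T : h <= r -> chainok h T ->
  (forall y, (y \in flat ((0, h) :: T)) = (y <= r.+1)) ->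
  size (flat ((0, h) :: T)) = r.+2 -> False.
Proof.
move=> hh hT hmem hsize.
set L := flat ((0, h) :: T).
have EL : L = 0 :: (iota 1 h ++ flat T) by [].
have [hp hl] := @chainok_path h T hT.
have Luniq : uniq L.
  apply: (@leq_size_uniq _ (iota 0 r.+2)); first exact: iota_uniq.
    by move=> y; rewrite mem_iota hmem; lia.
  by rewrite hsize size_iota.
have Lperm : perm_eq L (iota 0 r.+2).
  by apply: uniq_perm => //; [exact: iota_uniq | move=> y; rewrite mem_iota hmem; lia].
have Emap : [seq nth z P k | k <- iota 0 r.+2] = P ++ [:: z].
  have -> : r.+2 = r.+1 + 1 by lia.
  rewrite iotaD map_cat add0n; congr (_ ++ _); last by rewrite /= nthz.
  rewrite -HsP; exact: mkseq_nth.
have Qperm : perm_eq [seq nth z P k | k <- L] (P ++ [:: z]).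
  by rewrite -Emap; apply: perm_map.
apply: HnoQ; exists [seq nth z P k | k <- L]; split.
- split; first by rewrite EL.
  split; first by rewrite (perm_uniq Qperm) cat_uniq P_uniq /= orbF andbT.
  rewrite sorted_map EL /= cat_path.
  rewrite last_iota add0n.
  by apply/andP; split; [exact: (@path_iota 0 h hh) | exact: hp].
- by rewrite size_map hsize.
- by rewrite EL.
- rewrite EL /= last_map last_cat.
  by rewrite last_iota add0n hl.
- move=> y; rewrite (perm_mem Qperm) mem_cat !inE orbC.
  by [].
Qed.


Lemma byflip a b : a <= r -> b <= r -> a != b -> (R b a -> False) -> R a b.
Proof. move=> ha hb hab H; case E: (R a b) => //; exfalso; apply: H; apply: flip => //; by rewrite E. Qed.

Lemma chain (X Y : nat -> bool) c0 n : Y c0 -> X (c0 + 2 * n) ->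
  (forall c, c0 <= c -> c + 2 <= c0 + 2 * n -> ~~ X c -> Y (c + 2)) ->
  exists c, [/\ c0 <= c <= c0 + 2 * n, X c & Y c].
Proof.
elim: n c0 => [|n IH] c0 hY hX hS.
  by exists c0; rewrite addn0 in hX *; split => //; lia.
case hX0: (X c0); first by exists c0; split => //; lia.
have hY2 := hS c0 (leqnn _) ltac:(lia) (negbT hX0).
have hX2 : X (c0 + 2 + 2 * n) by have -> : c0 + 2 + 2 * n = c0 + 2 * n.+1 by lia.
have hS2 : forall c, c0 + 2 <= c -> c + 2 <= c0 + 2 + 2 * n -> ~~ X c -> Y (c + 2).
  move=> c hc1 hc2; apply: hS; lia.
have [c [hc hXc hYc]] := IH (c0 + 2) hY2 hX2 hS2.
by exists c; split => //; lia.
Qed.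

Ltac solve_j := match goal with
 | |- is_true (R _ r.+1) => apply: Rz; lia
 | |- is_true (R r.+1 _) => apply: zR; lia
 | |- is_true (R _ _) => assumption
 | |- _ \/ _ => (left; lia) || (right; lia)
 | |- _ => lia
 end.
Ltac tm h T := apply: (@good h T);
  [ lia
  | cbn [chainok fst snd]; repeat split; solve_j
  | let y := fresh "y" in move=> y; rewrite /flat /= in_cons !mem_cat !mem_iota in_nil; lia
  | rewrite /flat /= !size_cat !size_iota /=; lia ].

Section Core.
Variables (s t i j : nat).
Hypotheses (ha2 : 2 <= alpha) (har : alpha + 3 <= r) (hs : 1 <= s <= alpha - 1)
  (ht : alpha + 3 <= t <= r) (hst : R s t) (hi : i < s) (hj : alpha + 2 <= j <= t - 1)
  (hij : R i j).

Lemma LB : R (i+1) (j-1).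
Proof.
apply: byflip; try lia; move=> H.
tm i [:: (j, t-1); (r.+1, r.+1); (s+1, j-1); (i+1, s); (t, r)].
Qed.

Lemma LA : R (s+1) (t-1).
Proof.
apply: byflip; try lia; move=> H.
tm i [:: (j, t-1); (s+1, j-1); (r.+1, r.+1); (i+1, s); (t, r)].
Qed.

Lemma LD : R (s+2) (i+1).
Proof.
have A := LA.
apply: byflip; try lia; move=> H.
tm (i+1) [:: (s+2, t-2); (r.+1, r.+1); (i+2, s+1); (t-1, r)].
Qed.

Lemma LR1 c : i + 4 <= c -> c <= t - 1 -> R (i+1) (c-1) -> R (t-1) (c-2).
Proof.
move=> h1 h2 h3.
apply: byflip; try lia; move=> H.
tm (i+1) [:: (c-1, t-2); (r.+1, r.+1); (i+2, c-2); (t-1, r)].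
Qed.

Lemma LF c : s + 2 <= c <= j - 1 -> R (t-1) c -> R (c-1) (i+1) -> False.
Proof.
move=> h1 h2 h3.
tm i [:: (j, t-1); (c, j-1); (r.+1, r.+1); (s+1, c-1); (i+1, s); (t, r)].
Qed.

Lemma finish c0 c1 n : s + 3 <= c0 -> c1 = c0 + 2 * n -> c1 <= j - 1 ->
  R (c0 - 1) (i+1) -> R (t-1) c1 -> False.
Proof.
move=> h1 hn h3 hY hX.
subst c1.
have HS : forall c, c0 <= c -> c + 2 <= c0 + 2 * n -> ~~ R (t-1) c -> R (c + 2 - 1) (i+1).
  move=> c hc1 hc2 nX.
  apply: byflip; try lia; move=> H.
  have E1 : c + 2 - 1 = c + 1 by lia.
  have E2 : c + 2 - 2 = c by lia.
  have := @LR1 (c+2) ltac:(lia) ltac:(lia).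
  rewrite E1 E2; rewrite E1 in H.
  move=> /(_ H) hh. by rewrite hh in nX.
have [c [hc hXc hYc]] := @chain (fun c => R (t-1) c) (fun c => R (c-1) (i+1)) c0 n hY hX HS.
apply: (@LF c) => //; lia.
Qed.

Lemma LXj1 : j <= t - 2 -> R (t-1) (j-1).
Proof.
move=> hjt.
apply: byflip; try lia; move=> H.
tm i [:: (j, t-2); (r.+1, r.+1); (i+1, j-1); (t-1, r)].
Qed.

Lemma LP3 : j = t - 1 -> i + 2 <= s -> R (i+2) (t-3).
Proof.
move=> ejt hd.
have B' : R (i+1) (t-2).
  have -> : t - 2 = j - 1 by lia.
  exact: LB.
apply: byflip; try lia; move=> H.
tm (i+1) [:: (t-2, t-1); (r.+1, r.+1); (s+1, t-3); (i+2, s); (t, r)].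
Qed.

Lemma LP4 : i + 7 <= t -> i + 3 <= alpha -> R (i+2) (t-3) -> R (t-1) (t-4).
Proof.
move=> h7 hb H3.
apply: byflip; try lia; move=> H.
tm (i+2) [:: (t-3, t-2); (r.+1, r.+1); (i+3, t-4); (t-1, r)].
Qed.

Lemma LP3' : j = t - 1 -> s = i + 1 -> i + 3 <= alpha -> R (i+2) (t-3).
Proof.
move=> ejt esi hb.
have B' : R (i+1) (t-2).
  have -> : t - 2 = j - 1 by lia.
  exact: LB.
have A' : R (i+2) (t-1).
  have -> : i + 2 = s + 1 by lia.
  exact: LA.
apply: byflip; try lia; move=> H.
tm (i+1) [:: (t-2, t-2); (r.+1, r.+1); (i+3, t-3); (i+2, i+2); (t-1, r)].
Qed.

Lemma LP5 : j = t - 1 -> s = i + 1 -> alpha = i + 2 -> s + 7 <= t -> R (i+3) (t-2).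
Proof.
move=> ejt esi hb ht7.
have B' : R (i+1) (t-2).
  have -> : t - 2 = j - 1 by lia.
  exact: LB.
have A' : R (i+2) (t-1).
  have -> : i + 2 = s + 1 by lia.
  exact: LA.
apply: byflip; try lia; move=> H.
tm (i+1) [:: (t-2, t-2); (i+3, t-3); (r.+1, r.+1); (i+2, i+2); (t-1, r)].
Qed.

Lemma LP6 : s = i + 1 -> alpha = i + 2 -> s + 7 <= t -> R (i+3) (t-2) -> R (i+4) (i+1).
Proof.
move=> esi hb ht7 H5.
apply: byflip; try lia; move=> H.
tm (i+1) [:: (i+4, t-3); (r.+1, r.+1); (i+2, i+3); (t-2, r)].
Qed.

Lemma core : (i + 2 <= s \/ t - s != 5) -> False.
Proof.
move=> hex.
have B := LB. have A := LA. have D := LD.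
case: (eqVneq j (s+3)) => [ej|nej].
  have E : j - 1 = s + 2 by lia.
  rewrite E in B; exact: asym D B.
have hj3 : s + 4 <= j by lia.
clear nej.
have D' : R (s + 3 - 1) (i+1) by have -> : s + 3 - 1 = s + 2 by lia.
case: (boolP (odd (j + s))) => hpar.
  have hq : j + s = ((j + s) %/ 2) * 2 + 1.
    by have := divn_eq (j + s) 2; rewrite modn2 hpar.
  move: hq; set q := (j + s) %/ 2; clearbody q => hq.
  clear hex hpar.
  have X := @LR1 j ltac:(lia) ltac:(lia) B.
  apply: (@finish (s+3) (j-2) (q - s - 2) _ _ _ D' X); lia.
have hq : j + s = ((j + s) %/ 2) * 2.
  by have := divn_eq (j + s) 2; rewrite modn2 (negbTE hpar) addn0.
move: hq; set q := (j + s) %/ 2; clearbody q => hq.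
clear hpar.
case: (leqP j (t-2)) => hjt.
  have X := LXj1 hjt.
  apply: (@finish (s+3) (j-1) (q - s - 2) _ _ _ D' X); lia.
have ejt : j = t - 1 by lia.
clear hjt.
case: (leqP (i+2) s) => hd.
  have H4 := LP4 ltac:(lia) ltac:(lia) (LP3 ejt hd).
  case: (eqVneq (t-4) (s+1)) => e4.
    rewrite e4 in H4; exact: asym A H4.
  have ht4 : s + 3 <= t - 4 by lia.
  clear e4.
  apply: (@finish (s+3) (t-4) (q - s - 3) _ _ _ D' H4); lia.
have ts7 : s + 7 <= t by case: hex; lia.
have esi : s = i + 1 by lia.
clear hex hd.
case: (leqP (i+3) alpha) => hb.
  have H4 := LP4 ltac:(lia) hb (LP3' ejt esi hb).
  apply: (@finish (s+3) (t-4) (q - s - 3) _ _ _ D' H4); lia.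
have ea : alpha = i + 2 by lia.
have H6 := LP6 esi ea ts7 (LP5 ejt esi ea ts7).
have X := @LR1 j ltac:(lia) ltac:(lia) B.
have H6' : R (i + 5 - 1) (i+1) by have -> : i + 5 - 1 = i + 4 by lia.
apply: (@finish (i+5) (j-2) (q - s - 3) _ _ _ H6' X); lia.
Qed.

End Core.

End Setting.


(* x_i is rendered as nth z P i (indices used are always in [0, r]). *)
Theorem lemma3p3 (V : finType) (adj : rel V) (r : nat) (P : seq V) (z : V)
    (alpha s t : nat) :
  tournament adj ->
  dpath adj P -> size P = r.+1 ->
  z \notin P ->
  2 <= alpha -> alpha + 3 <= r ->
  (forall i, alpha < i <= r -> adj (nth z P i) z) ->
  (forall i, i <= alpha -> adj z (nth z P i)) ->
  ~ (exists Q : seq V, [/\ dpath adj Q, size Q = r.+2,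
        head z Q = nth z P 0, last z Q = nth z P r & Q =i z :: P]) ->
  1 <= s <= alpha - 1 -> alpha + 3 <= t <= r ->
  adj (nth z P s) (nth z P t) ->
  (3 <= s -> forall i j, i <= s - 2 -> alpha + 2 <= j <= t - 1 ->
      ~~ adj (nth z P i) (nth z P j)) /\
  (t - s != 5 -> forall j, alpha + 2 <= j <= t - 1 ->
      ~~ adj (nth z P s.-1) (nth z P j)).
Proof.
move=> Ht HP HsP HzP ha2 har Hzin Hzout HnoQ hs ht hst.
have C := fun i j hi hj hij hex =>
  @core V adj r P z alpha Ht HP HsP HzP Hzin Hzout HnoQ s t i j ha2 har hs ht hst hi hj hij hex.
split.
- move=> h3 i j hi hj; apply/negP => hij.
  apply: (C i j _ hj hij); [lia | left; lia].
- move=> h5 j hj; apply/negP => hij.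
  apply: (C s.-1 j _ hj hij); [lia | right; exact: h5].
Qed.
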